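(* Let $k\ge s\ge1$ and let the distinct abscissae $\tau_1,\dots,\tau_k\in[0,1]$ be such that the interpolatory quadrature formula $(\omega_i,\tau_i)_{i=1}^k$ has order at least $2s$ (i.e. is exact for all polynomials of degree at most $2s-1$). Then HBVM$(k,s)$ is perfectly $A$-stable, whatever the choice of the fundamental abscissae $c_1,\dots,c_s$ among the $\{\tau_i\}$.
   Context: $\omega_i=\int_0^1\ell_i(t)\,\mathrm{d}t$ with $\ell_i$ the Lagrange polynomials on the nodes $\{\tau_i\}$. Let $P_i(t)=\sqrt{2i-1}\,\hat P_{i-1}(t)$, where $\hat P_{i-1}$ is the shifted Legendre polynomial of degree $i-1$ on $[0,1]$ (so $\{P_i\}$ is orthonormal on $[0,1]$). HBVM$(k,s)$ is the Runge--Kutta method with abscissae $\tau_i$, weights $\omega_i$ and Butcher matrix $A=\mathcal I_s\mathcal P_s^T\Omega$, where $\Omega=\mathrm{diag}(\omega_1,\dots,\omega_k)$, $(\mathcal I_s)_{ij}=\int_0^{\tau_i}P_j(x)\,\mathrm{d}x$, $(\mathcal P_s)_{ij}=P_j(\tau_i)$ ($i=1,\dots,k$, $j=1,\dots,s$). The $\{\tau_i\}$ are split into $s$ fundamental and $k-s$ silent abscissae. A method is perfectly $A$-stable if, applied to the test equation $y'=\lambda y$, its region of absolute stability $\{q=h\lambda\in\mathbb C: |R(q)|<1\}$ coincides exactly with the open left half complex plane $\mathbb C^-$. *)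

(* Defs.v *)
From HB Require Import structures.
From mathcomp Require Import all_boot all_order all_algebra.
From mathcomp Require Import all_classical all_reals.
From mathcomp Require Import topology normedtype measure lebesgue_measure
  lebesgue_integral.
From mathcomp Require Import complex.
Set Implicit Arguments. Unset Strict Implicit. Unset Printing Implicit Defensive.
Import Order.TTheory GRing.Theory Num.Theory.
Local Open Scope ring_scope.

Section HBVM.
Variable R : realType.

Definition integ (a b : R) (f : R -> R) : R :=
  Rintegral lebesgue_measure `[a, b]%classic f.

(* shifted Legendre polynomial of degree n on [0,1], Rodrigues formula:
   hatP_n(x) = 1/n! d^n/dx^n (x^2 - x)^n  (= P_n(2x-1)) *)
Definition shLegendre (n : nat) : {poly R} :=
  (n`!%:R)^-1 *: ((('X ^+ 2 - 'X) ^+ n) ^`(n)).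

(* orthonormal basis: P_{j+1} = sqrt(2j+1) hatP_j, indexed from 0 *)
Definition Pn (j : nat) : {poly R} := Num.sqrt (j.*2.+1%:R) *: shLegendre j.

Definition lagrange k (tau : 'I_k -> R) (i : 'I_k) : {poly R} :=
  \prod_(j < k | j != i) ((tau i - tau j)^-1 *: ('X - (tau j)%:P)).

Definition qweight k (tau : 'I_k -> R) (i : 'I_k) : R :=
  integ 0 1 (fun t => (lagrange tau i).[t]).

Definition quad_exact_deg k (tau : 'I_k -> R) (d : nat) : Prop :=
  forall p : {poly R}, (size p <= d.+1)%N ->
    \sum_(i < k) qweight tau i * p.[tau i] = integ 0 1 (fun t => p.[t]).

Definition Imat k s (tau : 'I_k -> R) : 'M[R]_(k, s) :=
  \matrix_(i < k, j < s) integ 0 (tau i) (fun x => (Pn j).[x]).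
Definition Pmat k s (tau : 'I_k -> R) : 'M[R]_(k, s) :=
  \matrix_(i < k, j < s) (Pn j).[tau i].
Definition Omega k (tau : 'I_k -> R) : 'M[R]_k :=
  diag_mx (\row_(i < k) qweight tau i).
Definition hbvm_A k s (tau : 'I_k -> R) : 'M[R]_k :=
  Imat s tau *m (Pmat s tau)^T *m Omega tau.
Definition hbvm_b k (tau : 'I_k -> R) : 'rV[R]_k := \row_(i < k) qweight tau i.

End HBVM.

(* Stability function of the RK method (A, b) on y' = lambda y, q = h lambda:
   R(q) = 1 + q b^T (I - q A)^{-1} e, defined when I - qA is invertible. *)
Definition rk_stab_defined (R : rcfType) k (A : 'M[R]_k) (q : R[i]) : bool :=
  (1%:M - q *: map_mx (real_complex R) A) \in unitmx.

Definition rk_stab (R : rcfType) k (A : 'M[R]_k) (b : 'rV[R]_k) (q : R[i]) : R[i] :=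
  1 + q * (map_mx (real_complex R) b *m invmx (1%:M - q *: map_mx (real_complex R) A)
           *m (const_mx 1 : 'cV[R[i]]_k)) 0 0.

Definition abs_stab_region (R : rcfType) k (A : 'M[R]_k) (b : 'rV[R]_k) : set R[i] :=
  [set q | rk_stab_defined A q /\ `|rk_stab A b q| < 1]%classic.

Definition perfectly_A_stable (R : rcfType) k (A : 'M[R]_k) (b : 'rV[R]_k) : Prop :=
  abs_stab_region A b = [set q : R[i] | Re q < 0]%classic.

(* Main.v *)
Require Import Defs.
From HB Require Import structures.
From mathcomp Require Import all_boot all_order all_algebra.
From mathcomp Require Import all_classical all_reals.
From mathcomp Require Import topology normedtype measure lebesgue_measure lebesgue_integral derive realfun ftc.
From mathcomp Require Import complex ring lra zify.
Import Order.TTheory GRing.Theory Num.Theory.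
Set Implicit Arguments. Unset Strict Implicit. Unset Printing Implicit Defensive.
Local Open Scope ring_scope.


Section Poly.
Variable R : realType.
Implicit Types p q : {poly R}.

Definition prim p : {poly R} :=
  \poly_(i < (size p).+1) (if i is i'.+1 then p`_i' / i'.+1%:R else 0).

Lemma deriv_prim p : (prim p)^`() = p.
Proof.
apply/polyP => i; rewrite coef_deriv coef_poly ltnS.
case: ifP => h.
  by rewrite /= -mulrnAr -mulr_natr mulVf ?mulr1 // pnatr_eq0.
by rewrite mul0rn nth_default // leqNgt h.
Qed.

Lemma prim0 p : (prim p).[0] = 0.
Proof. by rewrite horner_coef0 coef_poly. Qed.

Lemma size_prim p : (size (prim p) <= (size p).+1)%N.
Proof. exact: size_poly. Qed.

Lemma derivn_root (a : R) m : forall n (r : {poly R}), (m < n)%N ->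
  ((('X - a%:P) ^+ n * r)^`(m)).[a] = 0.
Proof.
elim: m => [|m IH] n r mn.
  by rewrite derivn0 hornerM horner_exp hornerXsubC subrr expr0n eqn0Ngt mn mul0r.
case: n mn => [//|n] mn.
rewrite derivSn.
have -> : (('X - a%:P) ^+ n.+1 * r)^`() = ('X - a%:P) ^+ n * (r *+ n.+1 + ('X - a%:P) * r^`()).
  rewrite derivM deriv_exp derivXsubC mul1r /= exprS; ring.
by rewrite IH.
Qed.


Lemma dLR (p : {poly R}) (a b : R) : derivable_oo_LRcontinuous (horner p) a b.
Proof.
split.
+ move=> x _; exact: derivable_horner.
+ apply: cvg_at_right_filter; exact: continuous_horner.
+ apply: cvg_at_left_filter; exact: continuous_horner.
Qed.

Lemma integ_poly (p F : {poly R}) (a b : R) :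
  a <= b -> F^`() = p -> integ a b (fun x => p.[x]) = F.[b] - F.[a].
Proof.
move=> ab dF; rewrite /integ.
have [->|ab'] := eqVneq a b.
  by rewrite set_itv1 Rintegral_set1 subrr.
have lab : a < b by rewrite lt_neqAle ab' ab.
rewrite /Rintegral (@continuous_FTC2 R (fun x => p.[x]) (horner F) a b lab) //.
- exact: (derivable_oo_LRcontinuous_within (dLR p a b)).
- exact: dLR.
- move=> x _; by rewrite -derivE dF.
Qed.

Lemma Pn0 : @Pn R 0 = 1.
Proof.
by rewrite /Pn /shLegendre /= expr0 /= fact0 mulr1n invr1 sqrtr1 !scale1r.
Qed.

Lemma XXfact : ('X^2 - 'X : {poly R}) = ('X - 0%:P) * ('X - 1%:P).
Proof. rewrite polyC0 polyC1 subr0; ring. Qed.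

Lemma size_g j : (size (('X^2 - 'X : {poly R}) ^+ j) <= (j.*2).+1)%N.
Proof.
have h3 : size ('X^2 - 'X : {poly R}) = 3.
  by rewrite size_polyDl size_polyXn // size_opp size_polyX.
have := size_exp ('X^2 - 'X : {poly R}) j; rewrite h3 /= => e.
by rewrite -[size _]prednK ?e ?mul2n // ltnNge leqn0 size_poly_eq0 expf_eq0 -size_poly_eq0 h3 andbF.
Qed.

Lemma size_Pn j : (size (@Pn R j) <= j.+1)%N.
Proof.
rewrite /Pn /shLegendre; apply: leq_trans (size_scale_leq _ _) _.
apply: leq_trans (size_scale_leq _ _) _.
apply/leq_sizeP => i hi; rewrite coef_derivn nth_default ?mul0rn //.
apply: leq_trans (size_g j) _; rewrite -addnn; lia.
Qed.

Lemma int_Pn j : integ 0 1 (fun x => (@Pn R j).[x]) = (j == 0)%:R.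
Proof.
case: j => [|j].
  rewrite Pn0 (@integ_poly _ 'X) ?ler01 ?derivX //.
  by rewrite !hornerX subr0.
set g := (('X^2 - 'X : {poly R}) ^+ j.+1).
rewrite (@integ_poly _ (Num.sqrt ((j.+1).*2.+1%:R) *: ((j.+1)`!%:R^-1 *: g^`(j)))) ?ler01 //; last first.
  by rewrite !derivZ -derivnS.
rewrite !hornerZ.
have g0 : g^`(j).[0] = 0.
  by rewrite /g XXfact exprMn derivn_root.
have g1 : g^`(j).[1] = 0.
  by rewrite /g XXfact exprMn mulrC derivn_root.
by rewrite g0 g1 !mulr0 subrr.
Qed.

End Poly.

Lemma size_aux (a b c d e f g i j s : nat) : (a <= maxn b c -> c <= (d+g).-1 -> b <= (f+e).-1 -> e <= g.+1 -> d <= f.+1 -> g <= j.+1 -> f <= i.+1 -> j < s -> i < s -> a <= (2*s).-1.+1)%N.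
Proof. lia. Qed.

Section Mats.
Variables (R : realType) (k s : nat) (tau : 'I_k -> R).
Hypothesis tau_ge0 : forall i, 0 <= tau i.
Hypothesis hq : quad_exact_deg tau (2 * s).-1.

Definition Q j : {poly R} := prim (Pn R j).
Definition Nm : 'M[R]_(s, k) := (Pmat s tau)^T *m Omega tau.
Definition Xm : 'M[R]_s := Nm *m Imat s tau.

Lemma NmE j l : Nm j l = (Pn R j).[tau l] * qweight tau l.
Proof. by rewrite /Nm /Omega mul_mx_diag !mxE. Qed.

Lemma ImatE l j : Imat s tau l j = (Q j).[tau l].
Proof.
rewrite mxE (@integ_poly _ _ (Q j)) ?tau_ge0 //; last exact: deriv_prim.
by rewrite /Q prim0 subr0.
Qed.

Lemma Q1 j : (Q j).[1] = (j == 0)%:R.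
Proof.
rewrite -int_Pn (@integ_poly _ _ (Q j)) ?ler01 //; last exact: deriv_prim.
by rewrite /Q prim0 subr0.
Qed.

Lemma A_eq : hbvm_A s tau = Imat s tau *m Nm.
Proof. by rewrite /hbvm_A /Nm mulmxA. Qed.

Lemma Xsym (i j : 'I_s) : Xm i j + Xm j i = ((i == 0 :> nat) && (j == 0 :> nat))%:R.
Proof.
rewrite !mxE -big_split /=.
have -> : \sum_(l < k) (Nm i l * Imat s tau l j + Nm j l * Imat s tau l i) =
   \sum_(l < k) qweight tau l * (Pn R i * Q j + Q i * Pn R j).[tau l].
  apply: eq_bigr => l _; rewrite !NmE !ImatE hornerD !hornerM; ring.
rewrite hq; last first.
  have := ltn_ord i; have := ltn_ord j.
  have := size_Pn R i; have := size_Pn R j.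
  have := size_prim (Pn R i); have := size_prim (Pn R j).
  have := size_polyMleq (Pn R i) (Q j); have := size_polyMleq (Q i) (Pn R j).
  have := size_polyD (Pn R i * Q j) (Q i * Pn R j).
  rewrite /Q; exact: size_aux.
rewrite (@integ_poly _ _ (Q i * Q j)) ?ler01 //; last first.
  by rewrite derivM !deriv_prim.
rewrite !hornerM /Q !prim0 mulr0 subr0 -!/(Q _) !Q1.
by rewrite -natrM mulnb.
Qed.

Lemma Ne j : \sum_l Nm j l = (j == 0 :> nat)%:R.
Proof.
have -> : \sum_l Nm j l = \sum_l qweight tau l * (Pn R j).[tau l].
  by apply: eq_bigr => l _; rewrite NmE mulrC.
rewrite hq ?int_Pn //.
have := ltn_ord j; have := size_Pn R j; lia.
Qed.

Lemma b_row (i0 : 'I_s) : val i0 = 0%N -> hbvm_b tau = row i0 Nm.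
Proof.
move=> h; apply/matrixP => a l; rewrite mxE [RHS]mxE NmE h Pn0 hornerC mul1r.
by [].
Qed.
End Mats.

Section Energy.
Variables (C : numClosedFieldType) (s : nat) (i0 : 'I_s).
Implicit Types (Y : 'M[C]_s) (g h : 'cV[C]_s).

Definition qf Y g := \sum_i \sum_j (g i 0)^* * Y i j * g j 0.
Definition nrm g := \sum_i g i 0 * (g i 0)^*.

Lemma sum_delta (F : 'I_s -> C) (j : 'I_s) : \sum_i F i * (i == j)%:R = F j.
Proof.
rewrite (bigD1 j) //= eqxx mulr1 big1 ?addr0 // => i ij.
by rewrite (negbTE ij) mulr0.
Qed.

Lemma qf_eq Y q g h : (1%:M - q *: Y) *m g = h ->
  nrm g - q * qf Y g = \sum_i (g i 0)^* * h i 0.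
Proof.
move=> <-.
have -> : nrm g = \sum_i \sum_j (g i 0)^* * (i == j)%:R * g j 0.
  apply: eq_bigr => i _.
  rewrite (eq_bigr (fun j => (g i 0)^* * g j 0 * (j == i)%:R)); last first.
    by move=> j _; rewrite eq_sym; ring.
  by rewrite sum_delta mulrC.
rewrite /qf mulr_sumr -sumrB; apply: eq_bigr => i _.
rewrite mulr_sumr -sumrB !mxE mulr_sumr; apply: eq_bigr => j _.
rewrite !mxE; ring.
Qed.

Lemma qf_conj Y g : (forall i j, (Y i j)^* = Y i j) ->
  (forall i j, Y i j + Y j i = ((i == i0) && (j == i0))%:R) ->
  qf Y g + (qf Y g)^* = (g i0 0)^* * g i0 0.
Proof.
move=> Yr Ys.
have -> : (qf Y g)^* = \sum_i \sum_j (g i 0)^* * Y j i * g j 0.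
  rewrite /qf rmorph_sum exchange_big /=; apply: eq_bigr => i _.
  rewrite rmorph_sum; apply: eq_bigr => j _.
  by rewrite !rmorphM /= conjCK Yr; ring.
rewrite -big_split /=.
rewrite (eq_bigr (fun i => \sum_j (g i 0)^* * g j 0 * (i == i0)%:R * (j == i0)%:R)); last first.
  move=> i _; rewrite -big_split /=; apply: eq_bigr => j _.
  rewrite -[RHS]mulrA -natrM mulnb -Ys; ring.
rewrite (eq_bigr (fun i => ((g i 0)^* * g i0 0) * (i == i0)%:R)); last first.
  move=> i _; rewrite (eq_bigr (fun j => ((g i 0)^* * g j 0 * (i == i0)%:R) * (j == i0)%:R)) //.
  by rewrite sum_delta; ring.
by rewrite sum_delta.
Qed.

Lemma nrm_ge0 g : 0 <= nrm g.
Proof. by apply: sumr_ge0 => i _; exact: mul_conjC_ge0. Qed.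

Lemma nrm_eq0 g : nrm g = 0 -> g = 0.
Proof.
move=> /eqP; rewrite psumr_eq0 => [/allP h|i _]; last exact: mul_conjC_ge0.
apply/matrixP => i j; rewrite (ord1 j) mxE.
by apply/eqP; rewrite -mul_conjC_eq0; apply: h; rewrite mem_index_enum.
Qed.

Lemma nrm_conj g : (nrm g)^* = nrm g.
Proof.
rewrite /nrm rmorph_sum; apply: eq_bigr => i _.
by rewrite rmorphM /= conjCK mulrC.
Qed.


Lemma energy Y q g : (forall i j, (Y i j)^* = Y i j) ->
  (forall i j, Y i j + Y j i = ((i == i0) && (j == i0))%:R) ->
  (1%:M - q *: Y) *m g = delta_mx i0 0 ->
  (1 + q * g i0 0) * (1 + q * g i0 0)^* = 1 + (q + q^*) * nrm g.
Proof.
move=> Yr Ys e.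
have := qf_eq e.
have -> : \sum_i (g i 0)^* * (delta_mx i0 0 : 'cV[C]_s) i 0 = (g i0 0)^*.
  rewrite (eq_bigr (fun i => (g i 0)^* * (i == i0)%:R)) ?sum_delta //.
  by move=> i _; rewrite mxE eqxx andbT.
move=> e1.
have e2 := qf_conj g Yr Ys.
have e3 : (nrm g - q * qf Y g)^* = (g i0 0)^*^* by rewrite e1.
rewrite rmorphB rmorphM /= nrm_conj conjCK in e3.
set S := qf Y g in e1 e2 e3.
set n := nrm g in e1 e3 *.
set a := g i0 0 in e1 e2 e3 *.
rewrite rmorphD rmorphM /= rmorph1.
apply/eqP; rewrite -subr_eq0; apply/eqP.
have -> : (1 + q * a) * (1 + q^* * a^*) - (1 + (q + q^*) * n) =
  q * (a - (n - q^* * S^*)) + q^* * (a^* - (n - q * S)) + q * q^* * (a * a^* - (S + S^*)).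
  ring.
by rewrite e3 e1 e2; ring.
Qed.

Lemma kernel Y q g : (forall i j, (Y i j)^* = Y i j) ->
  (forall i j, Y i j + Y j i = ((i == i0) && (j == i0))%:R) ->
  q + q^* < 0 -> (1%:M - q *: Y) *m g = 0 -> g = 0.
Proof.
move=> Yr Ys qneg e.
have := qf_eq e.
have -> : \sum_i (g i 0)^* * (0 : 'cV[C]_s) i 0 = 0.
  by rewrite big1 // => i _; rewrite mxE mulr0.
move=> e1.
have e2 := qf_conj g Yr Ys.
have e3 : (nrm g - q * qf Y g)^* = 0^* by rewrite e1.
rewrite rmorphB rmorphM /= nrm_conj rmorph0 in e3.
set S := qf Y g in e1 e2 e3.
set n := nrm g in e1 e3 *.
have key : n * (q + q^*) = q * q^* * ((g i0 0)^* * g i0 0).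
  rewrite -e2.
  have -> : n * (q + q^*) = q^* * (n - q * S) + q * (n - q^* * S^*) + q * q^* * (S + S^*) by ring.
  by rewrite e1 e3 !mulr0 !add0r.
have h1 : 0 <= n * (q + q^*).
  rewrite key; apply: mulr_ge0; first exact: mul_conjC_ge0.
  by rewrite mulrC mul_conjC_ge0.
have h2 : n * (q + q^*) <= 0 by apply: mulr_ge0_le0; [exact: nrm_ge0|exact: ltW].
have : n * (q + q^*) = 0 by apply/eqP; rewrite eq_le h2 h1.
move/eqP; rewrite mulf_eq0 (lt_eqF qneg) orbF => /eqP n0.
exact: nrm_eq0.
Qed.
End Energy.

Section MatGen.
Variables (F : fieldType) (m n : nat) (M : 'M[F]_(m, n)) (N : 'M[F]_(n, m)).

Lemma swap_inv (J : 'M[F]_n) :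
  (1%:M - N *m M) *m J = 1%:M -> (1%:M - M *m N) *m (1%:M + M *m J *m N) = 1%:M.
Proof.
move=> h.
have hX : N *m M *m J = J - 1%:M.
  by rewrite -h mulmxBl mul1mx opprB addrC subrK.
rewrite mulmxDr mulmx1 mulmxBl mul1mx.
have -> : M *m N *m (M *m J *m N) = M *m (N *m M *m J) *m N by rewrite !mulmxA.
rewrite hX mulmxBr mulmx1 mulmxBl.
by rewrite opprB [M *m J *m N + _]addrC !subrK.
Qed.

Lemma invmx_swap (J : 'M[F]_n) :
  (1%:M - N *m M) *m J = 1%:M -> invmx (1%:M - M *m N) = 1%:M + M *m J *m N.
Proof.
move=> h; have BK := swap_inv h.
have [Bu _] := mulmx1_unit BK.
transitivity (invmx (1%:M - M *m N) *m ((1%:M - M *m N) *m (1%:M + M *m J *m N))).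
  by rewrite BK mulmx1.
by rewrite mulmxA mulVmx // mul1mx.
Qed.

Lemma stab_formula (i0 : 'I_n) (J : 'M[F]_n) :
  (1%:M - N *m M) *m J = 1%:M -> N *m (const_mx 1 : 'cV[F]_m) = delta_mx i0 0 ->
  (row i0 N *m invmx (1%:M - M *m N) *m (const_mx 1 : 'cV[F]_m)) 0 0 = J i0 i0.
Proof.
move=> h Ne; rewrite (invmx_swap h) rowE.
have hX : N *m M *m J = J - 1%:M.
  by rewrite -h mulmxBl mul1mx opprB addrC subrK.
rewrite mulmxDr mulmx1 mulmxDl -(mulmxA _ N) Ne.
have -> : (delta_mx 0 i0 : 'rV[F]_n) *m N *m (M *m J *m N) *m (const_mx 1 : 'cV[F]_m) =
   (delta_mx 0 i0 : 'rV[F]_n) *m (N *m M *m J) *m (N *m (const_mx 1 : 'cV[F]_m)) by rewrite !mulmxA.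
rewrite hX Ne mulmxBr mulmxBl mulmx1 addrC subrK.
by rewrite -rowE -colE !mxE.
Qed.

End MatGen.

Lemma unit_swap (F : fieldType) (m n : nat) (M : 'M[F]_(m, n)) (N : 'M[F]_(n, m)) :
  (1%:M - M *m N) \in unitmx -> (1%:M - N *m M) \in unitmx.
Proof.
move=> u.
have := @swap_inv F n m N M (invmx (1%:M - M *m N)) (mulmxV u).
by case/mulmx1_unit.
Qed.

Theorem theorem1p2 (R : realType) (k s : nat) (tau : 'I_k -> R)
  (c : 'I_s -> 'I_k) :
  (0 < s)%N -> (s <= k)%N ->
  injective tau -> (forall i, 0 <= tau i <= 1) ->
  quad_exact_deg tau (2 * s).-1 ->
  injective c ->
  perfectly_A_stable (hbvm_A s tau) (hbvm_b tau).
Proof.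
move=> s0 sk tinj tau01 hq cinj.
have tau0 : forall i, 0 <= tau i by move=> i; case/andP: (tau01 i).
pose i0 : 'I_s := Ordinal s0.
have hi0 : val i0 = 0%N by [].
have eqi0 : forall j : 'I_s, (val j == 0%N) = (j == i0) by move=> j.
pose Mc := map_mx (real_complex R) (Imat s tau).
pose Nc := map_mx (real_complex R) (Nm s tau).
pose Xc := Nc *m Mc.
have hA : map_mx (real_complex R) (hbvm_A s tau) = Mc *m Nc by rewrite (A_eq s tau) map_mxM.
have hb : map_mx (real_complex R) (hbvm_b tau) = row i0 Nc by rewrite (b_row tau hi0) map_row.
have hNe : Nc *m (const_mx 1 : 'cV[R[i]]_k) = delta_mx i0 0.
  apply/matrixP => j z; rewrite (ord1 z) !mxE.
  rewrite (eq_bigr (fun l => real_complex R (Nm s tau j l))); last first.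
    by move=> l _; rewrite !mxE mulr1.
  by rewrite -rmorph_sum (Ne hq) rmorph_nat eqi0 andbT.
have hXc : Xc = map_mx (real_complex R) (Xm s tau) by rewrite /Xc /Xm map_mxM.
have Xr : forall i j, (Xc i j)^* = Xc i j.
  by move=> i j; rewrite hXc mxE; exact: conjc_real.
have Xs : forall i j, Xc i j + Xc j i = ((i == i0) && (j == i0))%:R.
  move=> i j; rewrite hXc [map_mx _ _ i j]mxE [map_mx _ _ j i]mxE -rmorphD (Xsym tau0 hq) rmorph_nat.
  by rewrite !eqi0.
have key : forall q : R[i], (1%:M - q *: Xc) \in unitmx ->
  rk_stab (hbvm_A s tau) (hbvm_b tau) q * (rk_stab (hbvm_A s tau) (hbvm_b tau) q)^*
    = 1 + (q + q^*) * nrm (col i0 (invmx (1%:M - q *: Xc)))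
  /\ col i0 (invmx (1%:M - q *: Xc)) != 0.
  move=> q u; set J := invmx _.
  have hJ : (1%:M - q *: Xc) *m J = 1%:M := mulmxV u.
  have hg : (1%:M - q *: Xc) *m col i0 J = delta_mx i0 0.
    by rewrite colE mulmxA hJ mul1mx.
  have hR : rk_stab (hbvm_A s tau) (hbvm_b tau) q = 1 + q * col i0 J i0 0.
    have hJ' : (1%:M - Nc *m (q *: Mc)) *m J = 1%:M by rewrite -scalemxAr.
    by rewrite /rk_stab hA hb scalemxAl (stab_formula hJ' hNe) mxE.
  split; first by rewrite hR; exact: energy Xr Xs hg.
  apply/eqP => g0; move: hg; rewrite g0 mulmx0 => /matrixP /(_ i0 0).
  by rewrite !mxE eqxx /= => /eqP; rewrite eq_sym oner_eq0.
have re_eq : forall q : R[i], q + q^* = 2%:R * (real_complex R (complex.Re q)) := fun q => addcJ q.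
have re_ge0 : forall q : R[i], 0 <= complex.Re q -> 0 <= q + q^*.
  move=> q h; rewrite re_eq mulr_ge0 ?ler0n //.
  by rewrite -(rmorph0 (real_complex R)) lecR.
have re_lt0 : forall q : R[i], real_complex R (complex.Re q) < 0 -> q + q^* < 0.
  by move=> q h; rewrite re_eq pmulr_rlt0 ?ltr0n.
rewrite /perfectly_A_stable; apply/seteqP; split => q /=.
- case=> hdef hlt.
  have u : (1%:M - q *: Xc) \in unitmx.
    move: hdef; rewrite /rk_stab_defined hA scalemxAl => /unit_swap.
    by rewrite -scalemxAr.
  have [e _] := key q u.
  move: hlt; rewrite -(@expr_lt1 _ 2) ?normr_ge0 // normCK e gtrDl => hlt.
  rewrite -complexRe -(rmorph0 (real_complex R)) ltcR ltNge; apply/negP => hre.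
  have : 0 <= (q + q^*) * nrm (col i0 (invmx (1%:M - q *: Xc))).
    by apply: mulr_ge0; [exact: re_ge0|exact: nrm_ge0].
  by rewrite (lt_geF hlt).
- rewrite -complexRe => hre.
  have u : (1%:M - q *: Xc) \in unitmx.
    rewrite unitmxE unitfE; apply/negP => /det0P [v vn0 vC].
    have : (1%:M - q *: Xc^T) *m v^T = 0.
      have := congr1 trmx vC; rewrite trmx_mul trmx0 => <-.
      by congr (_ *m _); apply/matrixP => a b; rewrite !mxE eq_sym.
    move=> e0.
    have Yr' : forall i j, (Xc^T i j)^* = Xc^T i j by move=> i j; rewrite mxE Xr.
    have Ys' : forall i j, Xc^T i j + Xc^T j i = ((i == i0) && (j == i0))%:R.
      by move=> i j; rewrite [Xc^T i j]mxE [Xc^T j i]mxE addrC Xs.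
    have vT0 := kernel Yr' Ys' (re_lt0 _ hre) e0.
    by move/eqP: vn0; apply; rewrite -[v]trmxK vT0 trmx0.
  split.
    rewrite /rk_stab_defined hA scalemxAl; apply: unit_swap.
    by rewrite -scalemxAr.
  have [e gn0] := key q u.
  rewrite -(@expr_lt1 _ 2) ?normr_ge0 // normCK e gtrDl pmulr_llt0; first exact: re_lt0.
  rewrite lt_neqAle nrm_ge0 andbT eq_sym; apply/eqP => /nrm_eq0.
  by move/eqP: gn0.
Qed.
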